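(* Let $0<\delta<1$, $0<\varepsilon<1/7$, $2<\alpha<\min(\frac{2}{1-\delta},3)$ and $0<\rho<\min\!\left(\frac{1-\delta}{2},\frac{2-\alpha(1-\delta)}{4}\right)$ be constants, $p=n^{\delta-1}$, and $H$ a balanced graph on $m=n^{\rho}$ vertices with average degree $\alpha$; let $n$ be sufficiently large. Let $p(G)$ denote the probability of outputting the graph $G$ under $G(n,p)$ and $p_H(G)$ the probability of outputting $G$ under $G_H(n,p)$. Then for every constant $\beta\in[0,1)$, with probability at least $1-\frac{4\varepsilon}{(1-\beta)^2}$ over $G\sim G(n,p)$, $p_H(G)\ge\beta\,p(G)$.
   Context: A graph with average degree $\alpha$ is balanced if every induced subgraph has average degree at most $\alpha$. $G(n,p)$ is the Erdős–Rényi random graph on $[n]$. With $H$ on vertex set $[m]$ ($m$ dividing $n$), partition $[n]$ into parts $P_i=\{(i-1)\frac nm+1,\dots,i\frac nm\}$. Distribution $G_H(n,p)$: sample $G'\sim G(n,p)$, choose a uniformly random set $M=\{v_1,\dots,v_m\}$ with $v_i\in P_i$, and replace the induced subgraph $G'[M]$ by a copy of $H$ with vertex $i$ of $H$ placed at $v_i$. *)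

(* Defs.v *)
From HB Require Import structures.
From mathcomp Require Import all_boot all_order all_algebra.
From mathcomp Require Import reals exp.
Set Implicit Arguments. Unset Strict Implicit. Unset Printing Implicit Defensive.
Import Order.TTheory GRing.Theory Num.Theory.
Local Open Scope ring_scope.

Definition is_graph (n : nat) (E : {set {set 'I_n}}) : bool :=
  [forall e in E, #|e| == 2%N].

Definition gnp_prob (R : realType) (n : nat) (p : R) (E : {set {set 'I_n}}) : R :=
  if is_graph E then p ^+ #|E| * (1 - p) ^+ ('C(n, 2) - #|E|) else 0.

Definition induced_edges (m : nat) (E : {set {set 'I_m}}) (S : {set 'I_m}) :=
  [set e in E | e \subset S].

Definition avg_deg (R : realType) (m : nat) (E : {set {set 'I_m}}) (S : {set 'I_m}) : R :=
  (2 * #|induced_edges E S|)%:R / #|S|%:R.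

Definition balanced (R : realType) (m : nat) (E : {set {set 'I_m}}) : Prop :=
  forall S : {set 'I_m}, S != set0 -> avg_deg R E S <= avg_deg R E setT.

(* Placements M = {v_1..v_m} with v_i in part P_i (0-indexed: part of v is v / (n/m)). *)
Definition placements (n m : nat) : {set {ffun 'I_m -> 'I_n}} :=
  [set f : {ffun 'I_m -> 'I_n} | [forall i : 'I_m, (f i %/ (n %/ m))%N == i]].

(* Replace G'[M] by a copy of H, vertex i of H at f i. *)
Definition plant (n m : nat) (E : {set {set 'I_n}}) (f : {ffun 'I_m -> 'I_n})
    (H : {set {set 'I_m}}) : {set {set 'I_n}} :=
  [set e in E | ~~ (e \subset [set f i | i : 'I_m])]
  :|: ((fun e : {set 'I_m} => [set f i | i in e]) @: H).

Definition gH_prob (R : realType) (n m : nat) (p : R) (H : {set {set 'I_m}})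
    (G : {set {set 'I_n}}) : R :=
  (#|placements n m|%:R)^-1 *
  \sum_(f in placements n m) \sum_(E : {set {set 'I_n}} | plant E f H == G)
      gnp_prob p E.

(* Main.v *)
Require Import Defs.
From HB Require Import structures.
From mathcomp Require Import all_boot all_order all_algebra.
From mathcomp Require Import reals exp.
From mathcomp Require Import ring lra zify.
Import Order.TTheory GRing.Theory Num.Theory.
Local Open Scope ring_scope.
Set Implicit Arguments. Unset Strict Implicit. Unset Printing Implicit Defensive.
Lemma sum_set_prod (R : realType) (T : finType) (phi : T -> bool -> R) :
  \sum_(G : {set T}) \prod_(e : T) phi e (e \in G) =
  \prod_(e : T) (phi e true + phi e false).
Proof.
have -> : \prod_(e : T) (phi e true + phi e false) =
          \prod_(e : T) \sum_(b : bool) phi e b.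
  by apply: eq_bigr => e _; rewrite big_bool.
rewrite bigA_distr_bigA.
rewrite (reindex (fun F : {ffun T -> bool} => [set x | F x])) /=; last first.
  exists (fun G : {set T} => [ffun x => x \in G]) => [F _|G _].
    by apply/ffunP => x; rewrite ffunE inE.
  by apply/setP => x; rewrite inE ffunE.
by apply: eq_bigr => F _; apply: eq_bigr => e _; rewrite inE.
Qed.

Definition wt (R : realType) (p : R) (n : nat) (e : {set 'I_n}) (b : bool) : R :=
  if #|e| == 2%N then (if b then p else 1 - p) else (if b then 0 else 1).

Lemma prod_const_pred (R : realType) (T : finType) (P : pred T) (x : R) :
  \prod_(i | P i) x = x ^+ #|P|.
Proof. by rewrite prodr_const. Qed.

Lemma qprod (R : realType) (p : R) (n : nat) (G : {set {set 'I_n}}) :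
  gnp_prob p G = \prod_(e : {set 'I_n}) wt p e (e \in G).
Proof.
rewrite /gnp_prob; case: ifP => [gr|ngr].
  have gr' : forall e, e \in G -> #|e| == 2%N by move=> e eG; move/forallP: gr => /(_ e); rewrite eG.
  rewrite (bigID (fun e : {set 'I_n} => #|e| == 2%N)) /=.
  rewrite [X in _ = _ * X]big1 ?mulr1; last first.
    move=> e /negbTE ne; rewrite /wt ne; case: ifP => // /gr'; by rewrite ne.
  rewrite (bigID (fun e : {set 'I_n} => e \in G)) /=.
  rewrite (eq_bigr (fun=> p)); last by move=> e /andP[e2 eG]; rewrite /wt e2 eG.
  rewrite [X in _ = _ * X](eq_bigr (fun=> 1 - p)); last by move=> e /andP[e2 /negbTE eG]; rewrite /wt e2 eG.
  rewrite !prod_const_pred; congr (_ ^+ _ * _ ^+ _).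
    apply: eq_card => e; rewrite -topredE /=; apply/idP/andP => [eG|[]//]; by rewrite gr'.
  have := cardsID G [set A : {set 'I_n} | #|A| == 2%N]; rewrite card_draws card_ord.
  have -> : [set A : {set 'I_n} | #|A| == 2%N] :&: G = G.
    by apply/setIidPr/subsetP => e eG; rewrite inE gr'.
  move=> <-; rewrite addnC addnK.
  apply: eq_card => e; rewrite [in RHS]unfold_in /= !inE; by rewrite andbC.
have [e eG ne] : exists2 e, e \in G & #|e| != 2%N.
  move/negbT: ngr; rewrite negb_forall => /existsP[e]; rewrite negb_imply => /andP[eG ne].
  by exists e.
by rewrite (bigD1 e) //= /wt (negbTE ne) eG mul0r.
Qed.

Definition Mset (n m : nat) (f : {ffun 'I_m -> 'I_n}) : {set 'I_n} := [set f i | i : 'I_m].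
Definition fH (n m : nat) (f : {ffun 'I_m -> 'I_n}) (H : {set {set 'I_m}}) : {set {set 'I_n}} :=
  (fun e : {set 'I_m} => [set f i | i in e]) @: H.
Definition af (R : realType) (p : R) (n m : nat) (f : {ffun 'I_m -> 'I_n})
   (H : {set {set 'I_m}}) (e : {set 'I_n}) (b : bool) : R :=
  if e \subset Mset f then ((b == (e \in fH f H))%:R) else wt p e b.

Lemma fH_sub n m (f : {ffun 'I_m -> 'I_n}) H e : e \in fH f H -> e \subset Mset f.
Proof.
case/imsetP => d _ ->; apply/subsetP => x /imsetP[i _ ->]; exact: imset_f.
Qed.

Lemma prod_natb (R : realType) (T : finType) (c : T -> bool) :
  \prod_(e : T) ((c e)%:R : R) = ([forall e, c e])%:R.
Proof.
case: (boolP [forall e, c e]) => [/forallP h|].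
  by rewrite big1 // => e _; rewrite h.
rewrite negb_forall => /existsP[e ne].
by rewrite (bigD1 e) //= (negbTE ne) mul0r.
Qed.

Lemma wt_sum (R : realType) (p : R) n (e : {set 'I_n}) : wt p e true + wt p e false = 1.
Proof. by rewrite /wt; case: ifP => _; rewrite ?subrKC ?add0r // addrC subrK. Qed.

Lemma Aform (R : realType) (p : R) n m (H : {set {set 'I_m}}) (f : {ffun 'I_m -> 'I_n})
  (G : {set {set 'I_n}}) :
  \sum_(E | plant E f H == G) gnp_prob p E = \prod_(e : {set 'I_n}) af p f H e (e \in G).
Proof.
pose chi (e : {set 'I_n}) (b : bool) : bool :=
  if e \subset Mset f then ((e \in G) == (e \in fH f H)) else (b == (e \in G)).
have key : forall E, (plant E f H == G) = [forall e, chi e (e \in E)].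
  move=> E; apply/idP/forallP => [/eqP pl e|h]; rewrite /chi.
    rewrite -pl /plant /Mset !inE; case: ifP => sub /=.
      by rewrite sub andbF.
    case: (boolP (e \in fH f H)) => [/fH_sub|]; first by rewrite /Mset sub.
    by move=> _; rewrite sub andbT orbF.
  apply/eqP/setP => e; move: (h e); rewrite /chi /plant /Mset !inE; case: ifP => sub /=.
    by rewrite andbF /= => /eqP ->.
  case: (boolP (e \in fH f H)) => [/fH_sub|]; first by rewrite /Mset sub.
  by move=> _; rewrite andbT orbF => /eqP.
rewrite big_mkcond /=.
rewrite (eq_bigr (fun E : {set {set 'I_n}} => \prod_(e : {set 'I_n}) ((chi e (e \in E))%:R * wt p e (e \in E)))); last first.
  move=> E _; rewrite big_split /= prod_natb -key qprod.
  by case: (plant E f H == G); rewrite ?mul1r ?mul0r.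
rewrite (sum_set_prod (fun e b => (chi e b)%:R * wt p e b)).
apply: eq_bigr => e _; rewrite /chi /af; case: ifP => sub.
  by rewrite -mulrDr wt_sum mulr1 eq_sym.
by case: (e \in G); rewrite /= ?mul1r ?mul0r ?addr0 ?add0r.
Qed.

Definition psi (R : realType) (p : R) n m (H : {set {set 'I_m}}) (f g : {ffun 'I_m -> 'I_n})
  (e : {set 'I_n}) (b : bool) : R := af p f H e b * af p g H e b / wt p e b.

Definition bnd (R : realType) (p : R) n m (H : {set {set 'I_m}}) (f g : {ffun 'I_m -> 'I_n})
  (e : {set 'I_n}) : R :=
  if (e \subset Mset f) && (e \subset Mset g) then
    (if e \in fH f H then p^-1 else 1) * (if #|e| == 2%N then (1 - p)^-1 else 1) else 1.

Lemma fH_pair n m (H : {set {set 'I_m}}) (f : {ffun 'I_m -> 'I_n}) e :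
  is_graph H -> injective f -> e \in fH f H -> #|e| == 2%N.
Proof.
move=> /forallP gr inj /imsetP[d dH ->]; rewrite card_imset //.
by move: (gr d); rewrite dH.
Qed.

Lemma xxx (R : realType) (x : R) : x * x / x = x.
Proof. by have [->|x0] := eqVneq x 0; rewrite ?mulr0 ?mul0r // mulfK. Qed.

Lemma xx1 (R : realType) (x : R) : x != 0 -> x / x = 1.
Proof. by move=> x0; rewrite divff. Qed.

Lemma sigma_bnd (R : realType) (p : R) n m (H : {set {set 'I_m}}) (f g : {ffun 'I_m -> 'I_n})
  (e : {set 'I_n}) :
  0 < p -> p < 1 -> is_graph H -> injective f -> injective g ->
  0 <= psi p H f g e true + psi p H f g e false <= bnd p H f g e.
Proof.
move=> p0 p1 gr injf injg.
have pn0 : p != 0 by rewrite gt_eqF.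
have qn0 : 1 - p != 0 by rewrite subr_eq0 eq_sym lt_eqF.
have q0 : 0 < 1 - p by rewrite subr_gt0.
have pi0 : 0 < p^-1 by rewrite invr_gt0.
have qi1 : 1 <= (1 - p)^-1 by rewrite invf_ge1 // lerBlDr lerDl ltW.
have pi1 : 1 <= p^-1 by rewrite invf_ge1 // ltW.
rewrite /psi /bnd /af.
have hx := @fH_pair _ _ H f e gr injf.
have hy := @fH_pair _ _ H g e gr injg.
have wF0 : 0 < wt p e false by rewrite /wt; case: ifP.
have wFi : 0 <= (wt p e false)^-1 by rewrite invr_ge0 ltW.
case: (e \subset Mset f); case: (e \subset Mset g) => /=.
- case: (boolP (e \in fH f H)) => [xf|nxf].
    rewrite /wt (eqP (hx xf)) /=.
    case: (e \in fH g H) => /=; rewrite ?mul1r ?mul0r ?addr0 ?lexx ?mul0r /=.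
      by rewrite ltW //= ler_peMr // ltW.
    by rewrite divr_ge0 // ltW.
  case: (e \in fH g H) => /=; rewrite ?mul1r ?mul0r ?addr0 ?add0r ?lexx ?mul0r /=.
    by case: ifP => _; rewrite ?ler01 ?invr_ge0 ?ltW.
  by rewrite wFi /= /wt; case: ifP => _; rewrite ?invr1 ?lexx.
- case: (boolP (e \in fH f H)) => [xf|nxf] /=.
    by rewrite /wt (eqP (hx xf)) /= mul1r !mul0r addr0 xx1 // lexx ler01.
  by rewrite !mul0r mul1r add0r xx1 ?lexx ?ler01 // gt_eqF.
- case: (boolP (e \in fH g H)) => [xf|nxf] /=.
    by rewrite /wt (eqP (hy xf)) /= mulr1 mulr0 mul0r addr0 xx1 // lexx ler01.
  by rewrite mulr0 mul0r mulr1 add0r xx1 ?lexx ?ler01 // gt_eqF.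
- rewrite !xxx wt_sum lexx andbT.
  exact: ler01.
Qed.

Lemma plc_cross n m (f g : {ffun 'I_m -> 'I_n}) i j :
  f \in placements n m -> g \in placements n m -> f i = g j -> i = j.
Proof.
rewrite !inE => /forallP hf /forallP hg e; apply/val_inj => /=.
by move: (hf i) (hg j); rewrite e => /eqP <- /eqP <-.
Qed.

Lemma plc_inj n m (f : {ffun 'I_m -> 'I_n}) :
  f \in placements n m -> injective f.
Proof. by move=> hf i j e; apply: (plc_cross hf hf e). Qed.

Definition Sfg n m (f g : {ffun 'I_m -> 'I_n}) : {set 'I_m} := [set i | f i == g i].

Lemma both_sub n m (f g : {ffun 'I_m -> 'I_n}) (e : {set 'I_n}) :
  f \in placements n m -> g \in placements n m ->
  e \subset Mset f -> e \subset Mset g -> e \subset f @: Sfg f g.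
Proof.
move=> hf hg /subsetP sf /subsetP sg; apply/subsetP => x xe.
case/imsetP: (sf x xe) => i _ xi; case/imsetP: (sg x xe) => j _ xj.
have ij : i = j by apply: (plc_cross hf hg); rewrite -xi -xj.
by rewrite xi; apply: imset_f; rewrite inE -xi ij -xj.
Qed.

Lemma prod_bnd (R : realType) (p alpha : R) n m (H : {set {set 'I_m}})
   (f g : {ffun 'I_m -> 'I_n}) :
  0 < p -> p < 1 -> 0 <= alpha ->
  (forall S : {set 'I_m}, (2 * #|induced_edges H S|)%:R <= alpha * #|S|%:R) ->
  f \in placements n m -> g \in placements n m ->
  \prod_(e : {set 'I_n}) bnd p H f g e <=
   ((p^-1) `^ (alpha / 2) * ((1 - p)^-1) ^+ m) ^+ #|Sfg f g|.
Proof.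
move=> p0 p1 a0 hbal hf hg.
have q0 : 0 < 1 - p by rewrite subr_gt0.
have qi1 : 1 <= (1 - p)^-1 by rewrite invf_ge1 // lerBlDr lerDl ltW.
have pi1 : 1 <= p^-1 by rewrite invf_ge1 // ltW.
have injf := plc_inj hf.
set S := Sfg f g.
rewrite /bnd -big_mkcond /= big_split /= -!big_mkcondr /= !prod_const_pred.
rewrite exprMn -exprM.
apply: ler_pM; [by rewrite exprn_ge0 // invr_ge0 ltW | by rewrite exprn_ge0 // invr_ge0 ltW | | ].
  set a1 := #|_|.
  have ha1 : (a1 <= #|induced_edges H S|)%N.
    apply: (leq_trans _ (leq_imset_card (fun d : {set 'I_m} => [set f i | i in d]) _)).
    apply: subset_leq_card; apply/subsetP => e; rewrite unfold_in /= => /andP[/andP[s1 s2] eH].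
    have sS := both_sub hf hg s1 s2.
    case/imsetP: eH => d dH ed; rewrite ed; apply: imset_f.
    rewrite inE dH /=; apply/subsetP => i id.
    have : f i \in f @: S by apply: (subsetP sS); rewrite ed imset_f.
    by case/imsetP => j jS /injf ->.
  rewrite -powR_mulrn ?(le_trans ler01) // -powR_mulrn ?powR_ge0 // -powRrM.
  apply: ler_powR => //.
  apply: (@le_trans _ _ (#|induced_edges H S|%:R)); first by rewrite ler_nat.
  have := hbal S; rewrite natrM => h.
  rewrite mulrAC -[X in X <= _](mulKf (_ : (2:R) != 0)) //; last by rewrite pnatr_eq0.
  lra.
apply: (ler_weXn2l qi1).
set a2 := #|_|.
apply: (@leq_trans 'C(#|f @: S|, 2)).
  rewrite -cards_draws; apply: subset_leq_card; apply/subsetP => e.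
  rewrite unfold_in /= inE => /andP[/andP[s1 s2] e2].
  by rewrite (both_sub hf hg s1 s2) e2.
apply: (@leq_trans 'C(#|S|, 2)); first by apply: leq_bin2l; apply: leq_imset_card.
rewrite bin2 leq_half_double.
have sm : (#|S| <= m)%N by rewrite -[X in (_ <= X)%N]card_ord max_card.
rewrite -muln2; apply: (leq_trans (leq_mul (leqnn _) (leq_trans (leq_pred _) sm))).
rewrite mulnC; set x := (m * _)%N; lia.
Qed.

Lemma sum_plc (R : realType) n m (Phi : 'I_m -> 'I_n -> R) :
  \sum_(f in placements n m) \prod_(i : 'I_m) Phi i (f i) =
  \prod_(i : 'I_m) \sum_(a : 'I_n | (a %/ (n %/ m))%N == i) Phi i a.
Proof.
rewrite bigA_distr_big_dep; apply: eq_bigl => f; rewrite inE.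
by apply/forallP/familyP => h i; apply: h.
Qed.

Lemma card_part n m (i : 'I_m) : (m %| n)%N -> (0 < n)%N ->
  #|[set a : 'I_n | (a %/ (n %/ m))%N == i]| = (n %/ m)%N.
Proof.
move=> mn n0; set k := (n %/ m)%N.
have nk : (k * m)%N = n by rewrite divnK.
have k0 : (0 < k)%N by rewrite lt0n; apply/negP => /eqP k0; move: n0; rewrite -nk k0.
have lt : forall r : 'I_k, (i * k + r < n)%N.
  move=> r; rewrite -nk; have := ltn_ord r; have := ltn_ord i => hi hr.
  apply: (@leq_trans (i * k + k)); first by rewrite ltn_add2l.
  by rewrite -mulSnr mulnC leq_mul2l hi orbT.
pose h := fun r : 'I_k => (Ordinal (lt r) : 'I_n).
have hinj : injective h by move=> r s /(congr1 val) /= /addnI /val_inj.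
have -> : [set a : 'I_n | (a %/ k)%N == i] = h @: setT.
  apply/setP => a; rewrite inE; apply/eqP/imsetP => [ha|[r _ ->]] /=.
    exists (Ordinal (ltn_pmod a k0)) => //; apply/val_inj => /=.
    by rewrite {1}(divn_eq a k) ha mulnC.
  by rewrite divnMDl // divn_small // addn0.
by rewrite card_imset // cardsT card_ord.
Qed.

Lemma card_part_R (R : realType) n m (i : 'I_m) : (m %| n)%N -> (0 < n)%N ->
  \sum_(a : 'I_n | (a %/ (n %/ m))%N == i) (1 : R) = (n %/ m)%:R.
Proof.
move=> mn n0.
transitivity ((#|[set a : 'I_n | (a %/ (n %/ m))%N == i]|)%:R : R); last by rewrite card_part.
rewrite -sum1_card natr_sum.
by apply: eq_big => [a|a _]; rewrite ?inE.
Qed.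

Lemma card_plc (R : realType) n m : (m %| n)%N -> (0 < n)%N ->
  (#|placements n m|%:R : R) = ((n %/ m)%:R) ^+ m.
Proof.
move=> mn n0.
have := sum_plc (fun (_ : 'I_m) (_ : 'I_n) => (1 : R)).
rewrite (eq_bigr (fun=> 1)); last by move=> f _; rewrite big1.
rewrite sumr_const => ->.
rewrite (eq_bigr (fun=> (n %/ m)%:R)); last by move=> i _; rewrite card_part_R.
by rewrite prodr_const card_ord.
Qed.

Lemma inner_sum (R : realType) n m (i : 'I_m) (a : 'I_n) (Y : R) :
  (m %| n)%N -> (0 < n)%N -> (a %/ (n %/ m))%N == i ->
  \sum_(b : 'I_n | (b %/ (n %/ m))%N == i) (if a == b then Y else 1) = Y + (n %/ m)%:R - 1.
Proof.
move=> mn n0 ai.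
rewrite (bigD1 a) //= eqxx.
rewrite (eq_bigr (fun=> 1)); last by move=> b /andP[_ /negbTE]; rewrite eq_sym => ->.
have := card_part_R R i mn n0; rewrite (bigD1 a) //= => e.
by rewrite -e; ring.
Qed.

Lemma F3 (R : realType) (p alpha : R) n m (H : {set {set 'I_m}}) :
  0 < p -> p < 1 -> 0 <= alpha ->
  (forall S : {set 'I_m}, (2 * #|induced_edges H S|)%:R <= alpha * #|S|%:R) ->
  is_graph H -> (m %| n)%N -> (0 < n)%N ->
  \sum_(G : {set {set 'I_n}}) (gH_prob p H G) ^+ 2 / gnp_prob p G <=
  (1 + ((p^-1) `^ (alpha / 2) * ((1 - p)^-1) ^+ m - 1) / (n %/ m)%:R) ^+ m.
Proof.
move=> p0 p1 a0 hbal gr mn n0.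
set Y := (p^-1) `^ (alpha / 2) * ((1 - p)^-1) ^+ m.
set P := placements n m.
set k := (n %/ m)%N.
have k0 : (0 < k)%N.
  by rewrite lt0n; apply/negP => /eqP k0; move: n0; rewrite -(divnK mn) -/k k0.
have kR0 : (0 : R) < k%:R by rewrite ltr0n.
have cP : (#|P|%:R : R) = k%:R ^+ m by rewrite card_plc.
set c := (#|P|%:R : R)^-1.
have c0 : 0 <= c by rewrite invr_ge0 ler0n.
have step1 : forall G : {set {set 'I_n}}, (gH_prob p H G) ^+ 2 / gnp_prob p G =
   c ^+ 2 * \sum_(f in P) \sum_(g in P) \prod_(e : {set 'I_n}) psi p H f g e (e \in G).
  move=> G; rewrite /gH_prob -/P -/c.
  under eq_bigr => f _ do rewrite Aform.
  rewrite exprMn -mulrA; congr (_ * _).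
  rewrite expr2 mulr_suml mulr_suml; apply: eq_bigr => f _.
  rewrite mulr_sumr mulr_suml; apply: eq_bigr => g _.
  by rewrite qprod -prodfV -!big_split.
under eq_bigr => G _ do rewrite step1.
rewrite -mulr_sumr.
rewrite exchange_big /=.
have step2 : forall f, f \in P -> \sum_(G : {set {set 'I_n}}) \sum_(g in P) \prod_(e : {set 'I_n}) psi p H f g e (e \in G)
    <= \sum_(g in P) Y ^+ #|Sfg f g|.
  move=> f fP; rewrite exchange_big /=; apply: ler_sum => g gP.
  rewrite sum_set_prod.
  apply: (le_trans _ (prod_bnd p0 p1 a0 hbal fP gP)).
  apply: ler_prod => e _; apply: sigma_bnd => //; exact: plc_inj.
have c2 : 0 <= c ^+ 2 by rewrite exprn_ge0.
apply: (le_trans (ler_wpM2l c2 (ler_sum _ step2))).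
have step3 : forall f, f \in P -> \sum_(g in P) Y ^+ #|Sfg f g| = (Y + k%:R - 1) ^+ m.
  move=> f fP.
  have fP' := fP; rewrite inE in fP'; move/forallP: fP' => fP'.
  rewrite (eq_bigr (fun g : {ffun 'I_m -> 'I_n} => \prod_(i : 'I_m) (if f i == g i then Y else 1))); last first.
    by move=> g _; rewrite -prodr_const big_mkcond; apply: eq_bigr => i _; rewrite inE.
  rewrite (sum_plc (fun i b => if f i == b then Y else 1)).
  rewrite (eq_bigr (fun=> Y + k%:R - 1)); last by move=> i _; rewrite inner_sum.
  by rewrite prodr_const card_ord.
rewrite (eq_bigr (fun=> (Y + k%:R - 1) ^+ m)); last by move=> f fP; rewrite step3.
rewrite sumr_const.
have -> : (Y + k%:R - 1) ^+ m *+ #|P| = #|P|%:R * (Y + k%:R - 1) ^+ m by rewrite mulr_natl.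
have -> : 1 + (Y - 1) / k%:R = (Y + k%:R - 1) / k%:R.
  by rewrite (addrAC Y) (mulrDl (Y - 1)) divff ?gt_eqF // addrC.
rewrite le_eqVlt; apply/orP; left; apply/eqP.
rewrite /c cP exprMn exprVn.
have kn0 : (k%:R : R) ^+ m != 0 by rewrite expf_neq0 // gt_eqF.
rewrite exprVn; move: kn0; set K := k%:R ^+ m; set z := (Y + _ - 1) ^+ m; clearbody K z => kn0.
by field.
Qed.

Lemma final_ineq (R : realType) (T : finType) (q h : T -> R) (good : pred T) (beta eps : R) :
  (forall G, 0 <= q G) -> (forall G, 0 <= h G) ->
  \sum_G q G = 1 -> \sum_G h G = 1 ->
  (forall G, q G = 0 -> h G = 0) ->
  (forall G, ~~ good G -> q G = 0) ->
  \sum_G (h G) ^+ 2 / q G <= 1 + 4 * eps ->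
  0 <= beta -> beta < 1 ->
  1 - 4 * eps / (1 - beta) ^+ 2 <= \sum_(G | good G && (beta * q G <= h G)) q G.
Proof.
move=> q0 h0 sq sh qh ngq V b0 b1.
have bb : 0 < (1 - beta) ^+ 2 by rewrite exprn_gt0 // subr_gt0.
have split : 1 = \sum_(G | good G && (beta * q G <= h G)) q G +
   \sum_(G | ~~ (good G && (beta * q G <= h G))) q G by rewrite -sq; apply: bigID.
set S1 := \sum_(G | good G && _) q G in split *.
set S2 := \sum_(G | ~~ _) q G in split.
have key : (1 - beta) ^+ 2 * S2 <= 4 * eps.
  rewrite /S2 mulr_sumr.
  apply: (@le_trans _ _ (\sum_G ((q G - h G) ^+ 2 / q G))).
    rewrite [X in _ <= X](bigID (fun G => ~~ (good G && (beta * q G <= h G)))) /=.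
    rewrite -[X in X <= _]addr0; apply: lerD.
      apply: ler_sum => G hG; rewrite negb_and in hG.
      have [qz|qnz] := eqVneq (q G) 0.
        by rewrite qz invr0 !mulr0.
      have qp : 0 < q G by rewrite lt_def qnz q0.
      case/orP: hG => hG; first by move: qnz; rewrite ngq ?eqxx.
      rewrite -ltNge in hG.
      rewrite ler_pdivlMr //.
      have e1 : 0 <= (1 - beta) * q G by rewrite mulr_ge0 // ?subr_ge0 ltW.
      have e2 : (1 - beta) * q G <= q G - h G by lra.
      have := ler_pM e1 e1 e2 e2.
      by rewrite -!expr2 exprMn expr2 mulrA.
    apply: sumr_ge0 => G _; apply: divr_ge0; [exact: sqr_ge0 | exact: q0].
  have -> : \sum_G (q G - h G) ^+ 2 / q G = \sum_G (q G - 2 * h G + h G ^+ 2 / q G).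
    apply: eq_bigr => G _; have [qz|qnz] := eqVneq (q G) 0.
      by rewrite qz (qh _ qz) !mulr0 invr0 !mulr0 subr0 addr0.
    by field.
  rewrite !big_split /= sumrN -mulr_sumr sq sh; lra.
have : S2 <= 4 * eps / (1 - beta) ^+ 2 by rewrite ler_pdivlMr // mulrC.
lra.
Qed.

Lemma wt_ge0 (R : realType) (p : R) n (e : {set 'I_n}) b : 0 <= p <= 1 -> 0 <= wt p e b.
Proof. by case/andP=> p0 p1; rewrite /wt; case: ifP; case: b; rewrite // ?subr_ge0 ?ler01. Qed.

Lemma q_ge0 (R : realType) (p : R) n (G : {set {set 'I_n}}) : 0 <= p <= 1 -> 0 <= gnp_prob p G.
Proof. by move=> hp; rewrite qprod; apply: prodr_ge0 => e _; apply: wt_ge0. Qed.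

Lemma sum_q (R : realType) (p : R) (n : nat) : \sum_(G : {set {set 'I_n}}) gnp_prob p G = 1.
Proof.
under eq_bigr => G _ do rewrite qprod.
by rewrite (sum_set_prod (fun e b => wt p e b)) big1 // => e _; rewrite wt_sum.
Qed.

Lemma af_ge0 (R : realType) (p : R) n m (f : {ffun 'I_m -> 'I_n}) H e b :
  0 <= p <= 1 -> 0 <= af p f H e b.
Proof. by move=> hp; rewrite /af; case: ifP => _; rewrite ?ler0n ?wt_ge0. Qed.

Lemma h_ge0 (R : realType) (p : R) (n m : nat) (H : {set {set 'I_m}}) (G : {set {set 'I_n}}) :
  0 <= p <= 1 -> 0 <= gH_prob p H G.
Proof.
move=> hp; rewrite /gH_prob; apply: mulr_ge0; first by rewrite invr_ge0 ler0n.
apply: sumr_ge0 => f _; rewrite Aform; apply: prodr_ge0 => e _; exact: af_ge0.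
Qed.

Lemma sum_h (R : realType) (p : R) (n m : nat) (H : {set {set 'I_m}}) :
  (0 < #|placements n m|)%N -> \sum_(G : {set {set 'I_n}}) gH_prob p H G = 1.
Proof.
move=> P0; rewrite /gH_prob -mulr_sumr exchange_big /=.
rewrite (eq_bigr (fun=> 1)); last first.
  move=> f _; under eq_bigr => G _ do rewrite Aform.
  rewrite (sum_set_prod (fun e b => af p f H e b)) big1 // => e _.
  rewrite /af; case: ifP => _; last exact: wt_sum.
  by case: (e \in fH f H); rewrite /= ?addr0 ?add0r.
by rewrite sumr_const -[_ *+ _]mulr_natl mulr1 mulVf // pnatr_eq0 -lt0n.
Qed.

Lemma h_zero (R : realType) (p : R) (n m : nat) (H : {set {set 'I_m}}) (G : {set {set 'I_n}}) :
  is_graph H -> ~~ is_graph G -> gH_prob p H G = 0.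
Proof.
move=> gr ng; rewrite /gH_prob big1 ?mulr0 // => f fP; rewrite Aform.
move: ng; rewrite negb_forall => /existsP[e]; rewrite negb_imply => /andP[eG ne].
rewrite (bigD1 e) //= eG /af; case: ifP => _.
  case: (boolP (e \in fH f H)) => [/(fH_pair gr (plc_inj fP))|]; first by rewrite (negbTE ne).
  by rewrite /= mul0r.
by rewrite /wt (negbTE ne) mul0r.
Qed.

Lemma small_pow (R : realType) (c t : R) : c < 0 -> 0 < t ->
  exists N : nat, forall n : nat, (N <= n)%N -> (n%:R : R) `^ c <= t.
Proof.
move=> c0 t0; set a := - c.
have a0 : 0 < a by rewrite /a oppr_gt0.
set x0 := (t^-1) `^ (a^-1).
exists (Num.truncn x0).+1 => n hn.
have x00 : 0 <= x0 by apply: powR_ge0.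
have nx : x0 <= n%:R.
  apply: (le_trans (ltW (truncnS_gt x0))); by rewrite ler_nat.
have := ge0_ler_powR (ltW a0) x00 (ler0n _ n) nx.
rewrite /x0 -powRrM mulVf; last by rewrite gt_eqF.
rewrite powRr1; last by rewrite invr_ge0 ltW.
move=> h.
have ti : 0 < t^-1 by rewrite invr_gt0.
have na : 0 < n%:R `^ a by apply: (lt_le_trans ti h).
have -> : c = - a by rewrite /a opprK.
rewrite powRN invf_ple ?posrE //.
Qed.

Lemma bern_up (R : realType) (u : R) (m : nat) : 0 <= u -> (1 + u) ^+ m * (1 - m%:R * u) <= 1.
Proof.
move=> u0; elim: m => [|m IH]; first by rewrite expr0 mul0r subr0 mul1r.
have e0 : 0 <= (1 + u) ^+ m by rewrite exprn_ge0 // addr_ge0.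
rewrite exprSr -mulrA.
apply: (le_trans _ IH); apply: ler_wpM2l => //.
rewrite -natr1; have m0 : (0:R) <= m%:R by rewrite ler0n.
have h1 := mulr_ge0 (mulr_ge0 m0 u0) u0; have h2 := mulr_ge0 u0 u0; nra.
Qed.

Lemma bern_down (R : realType) (p : R) (m : nat) : 0 <= p -> p <= 1 -> 1 - m%:R * p <= (1 - p) ^+ m.
Proof.
move=> p0 p1; elim: m => [|m IH]; first by rewrite expr0 mul0r subr0.
rewrite exprSr -natr1.
have q0 : 0 <= 1 - p by rewrite subr_ge0.
have m0 : (0 : R) <= m%:R by rewrite ler0n.
have := ler_wpM2r q0 IH; nra.
Qed.

Lemma pow_final (R : realType) (u eps : R) (m : nat) :
  0 <= u -> 0 < eps -> eps < 1 / 7 -> m%:R * u <= 2 * eps -> (1 + u) ^+ m <= 1 + 4 * eps.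
Proof.
move=> u0 e0 e1 hm.
have := bern_up m u0.
have X0 : 0 <= (1 + u) ^+ m by rewrite exprn_ge0 // addr_ge0.
move: X0 hm; set X := (1 + u) ^+ m; set t := m%:R * u => X0 hm h.
have t0 : 0 <= t by rewrite /t mulr_ge0 // ler0n.
have h1 : eps * t <= eps * (2 * eps) by rewrite ler_wpM2l // ltW.
have h2 : eps * eps <= eps * (1 / 4) by rewrite ler_wpM2l ?ltW //; lra.
have h3 : 1 <= (1 + 4 * eps) * (1 - t) by lra.
have tp : 0 < 1 - t by lra.
by rewrite -(ler_pM2r tp); apply: (le_trans h).
Qed.

Unset Implicit Arguments.
Set Strict Implicit.

Theorem lemmaC2 (R : realType) (delta eps alpha rho : R) :
  0 < delta -> delta < 1 ->
  0 < eps -> eps < 1 / 7 ->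
  2 < alpha -> alpha < 2 / (1 - delta) -> alpha < 3 ->
  0 < rho -> rho < (1 - delta) / 2 -> rho < (2 - alpha * (1 - delta)) / 4 ->
  exists N : nat, forall n : nat, (N <= n)%N ->
  forall (m : nat) (H : {set {set 'I_m}}),
    m%:R = (n%:R : R) `^ rho -> (m %| n)%N ->
    is_graph H -> avg_deg R H setT = alpha -> balanced R H ->
  forall beta : R, 0 <= beta -> beta < 1 ->
    let p : R := (n%:R : R) `^ (delta - 1) in
    1 - 4 * eps / (1 - beta) ^+ 2 <=
      \sum_(G : {set {set 'I_n}} | is_graph G && (beta * gnp_prob p G <= gH_prob p H G))
        gnp_prob p G.
Proof.
move=> d0 d1 e0 e1 a2 a_lt a3 r0 r1 r2.
have c1n : rho + (delta - 1) < 0 by lra.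
have c2n : rho + rho + (1 - delta) * (alpha / 2) + - 1 < 0 by nra.
have h12 : (0 : R) < 1 / 2 by lra.
have [N1 hN1] := small_pow c1n h12.
have [N2 hN2] := small_pow c2n e0.
exists (maxn (maxn N1 N2) 2) => n hn m H hm mn gr avg bal beta b0 b1.
cbv zeta; set p := (n%:R : R) `^ (delta - 1).
have n2 : (2 <= n)%N by move: hn; rewrite !geq_max => /andP[_ ->].
have hn1 : (N1 <= n)%N by move: hn; rewrite !geq_max => /andP[/andP[-> _] _].
have hn2 : (N2 <= n)%N by move: hn; rewrite !geq_max => /andP[/andP[_ ->] _].
have n0 : (0 < n)%N by apply: leq_trans n2.
have nR1 : (1 : R) < n%:R by rewrite ltr1n.
have nR0 : (0 : R) < n%:R by apply: lt_trans nR1.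
have nn0 : (n%:R : R) != 0 by rewrite gt_eqF.
have pD : forall r s, (n%:R : R) `^ (r + s) = n%:R `^ r * n%:R `^ s.
  by move=> r s; rewrite powRD // nn0 implybT.
have p0 : 0 < p by rewrite powR_gt0.
have pinv : p^-1 = n%:R `^ (1 - delta) by rewrite /p -powRN opprB.
have p1 : p < 1.
  have dd : 0 < 1 - delta by lra.
  have h : 1 < n%:R `^ (1 - delta).
    by have := gt0_ltr_powR dd (@ler01 R) (ltW nR0) nR1; rewrite powR1.
  by rewrite -(invf_gt1 p0) pinv.
have p01 : 0 <= p <= 1 by rewrite !ltW.
have mR0 : (0 : R) < m%:R by rewrite hm powR_gt0.
have m0 : (0 < m)%N by rewrite -(ltr0n R).
set k := (n %/ m)%N.
have kR : (k%:R : R) = n%:R / m%:R.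
  by rewrite -[in RHS](divnK mn) natrM mulfK // gt_eqF.
have a0 : 0 <= alpha by lra.
have hbal : forall S : {set 'I_m}, (2 * #|induced_edges H S|)%:R <= alpha * #|S|%:R.
  move=> S; have [->|Sn] := eqVneq S set0.
    have -> : induced_edges H set0 = set0.
      apply/setP => e; rewrite !inE; apply/negP => /andP[eH].
      rewrite subset0 => /eqP ee; move/forallP: gr => /(_ e); rewrite eH ee cards0.
      by [].
    by rewrite cards0 !muln0 cards0 mulr0.
  have := bal S Sn; rewrite avg /avg_deg.
  have s0 : (0 : R) < #|S|%:R by rewrite ltr0n card_gt0.
  by rewrite ler_pdivrMr.
have P0 : (0 < #|placements n m|)%N.
  rewrite -(ltr0n R) card_plc // -/k exprn_gt0 // kR divr_gt0 //.
have qpos : forall G : {set {set 'I_n}}, is_graph G -> 0 < gnp_prob p G.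
  move=> G gG; rewrite /gnp_prob gG mulr_gt0 // exprn_gt0 // subr_gt0 //.
apply: (@final_ineq R _ (gnp_prob p) (gH_prob p H) (fun G => @is_graph n G) beta eps).
- by move=> G; apply: q_ge0.
- by move=> G; apply: h_ge0.
- exact: sum_q.
- exact: sum_h.
- move=> G qG; case: (boolP (is_graph G)) => gG.
    by move: (qpos G gG); rewrite qG ltxx.
  exact: h_zero.
- by move=> G gG; rewrite /gnp_prob (negbTE gG).
- apply: (le_trans (F3 p0 p1 a0 hbal gr mn n0)).
  set B := p^-1 `^ (alpha / 2); set Z := (1 - p)^-1 ^+ m.
  have pi1 : 1 <= p^-1 by rewrite invf_ge1 // ltW.
  have hB1 : 1 <= B by rewrite /B -{1}(powRr0 (p^-1)); apply: ler_powR => //; lra.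
  have hZ1 : 1 <= Z by rewrite /Z exprn_ege1 // invf_ge1 ?subr_gt0 // lerBlDr lerDl ltW.
  have hZ2 : Z <= 2.
    have hmp : m%:R * p <= 1 / 2 by rewrite hm /p -pD; apply: hN1.
    have hb := bern_down m (ltW p0) (ltW p1).
    have qm : 1 / 2 <= (1 - p) ^+ m by lra.
    have qm0 : 0 < (1 - p) ^+ m by lra.
    rewrite /Z exprVn invf_ple ?posrE //; last by lra.
  have hB : B = n%:R `^ ((1 - delta) * (alpha / 2)) by rewrite /B pinv -powRrM.
  apply: pow_final => //.
    by rewrite divr_ge0 ?ler0n // subr_ge0 mulr_ege1.
  rewrite -/k kR hm hB.
  set A := n%:R `^ rho.
  have A0 : 0 < A by rewrite powR_gt0.
  have W : A * A * n%:R `^ ((1 - delta) * (alpha / 2)) / n%:R <= eps.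
    apply: le_trans (hN2 n hn2).
    by rewrite !pD powR_inv1 ?ler0n.
  move: W; set W := A * A * _ / _ => hW.
  have -> : A * ((n%:R `^ ((1 - delta) * (alpha / 2)) * Z - 1) / (n%:R / A)) = W * Z - A * A / n%:R.
    by rewrite /W; field; rewrite nn0 gt_eqF.
  have AAn : 0 <= A * A / n%:R by rewrite divr_ge0 ?mulr_ge0 ?ltW.
  have W0 : 0 <= W by rewrite /W divr_ge0 ?mulr_ge0 ?powR_ge0 ?ltW.
  have := ler_wpM2l W0 hZ2; lra.
- exact: b0.
- exact: b1.
Qed.
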